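(* Fix constants $0\le\gamma\le\delta\le1$. Let $p_e(n;\gamma,\delta)$ be the probability that $1$ is contained in a cycle of length between $\gamma n$ and $\delta n$ of a permutation chosen uniformly at random from all permutations of $[n]$ with all cycle lengths even. Then $\lim_{n\to\infty}p_e(n;\gamma,\delta)=\sqrt{1-\gamma}-\sqrt{1-\delta}$, where the limit is taken through even $n$. *)

(* Defs.v *)
From HB Require Import structures.
From mathcomp Require Import all_boot all_order all_algebra all_fingroup.
From mathcomp Require Import all_classical all_reals topology normedtype sequences.
Set Implicit Arguments. Unset Strict Implicit. Unset Printing Implicit Defensive.
Import Order.TTheory GRing.Theory Num.Theory.
Local Open Scope ring_scope.

Definition all_cycles_even (n : nat) (s : 'S_n) : bool :=
  [forall x : 'I_n, ~~ odd #|porbit s x|].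

(* p_e(n; gamma, delta): among permutations of [n] = {0,...,n-1} (element 1 of
   the paper is ord0 here) with all cycles even, the proportion for which the
   cycle containing ord0 has length L with gamma*n <= L <= delta*n.
   For n = 0 we set it to 0 (irrelevant for the limit). *)
Definition p_e (R : realType) (gamma delta : R) (n : nat) : R :=
  match n with
  | 0 => 0
  | k.+1 =>
      (#|[pred s : 'S_(k.+1) | all_cycles_even s &&
            ((gamma * (k.+1)%:R <= (#|porbit s ord0|)%:R) &&
             ((#|porbit s ord0|)%:R <= delta * (k.+1)%:R))]|)%:R
      / (#|[pred s : 'S_(k.+1) | all_cycles_even s]|)%:R
  end.

(* Main.v *)
Require Import Defs.
From HB Require Import structures.
From mathcomp Require Import all_boot all_order all_algebra all_fingroup.
From mathcomp Require Import ring lra zify.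
Set Implicit Arguments. Unset Strict Implicit. Unset Printing Implicit Defensive.

Section Comb.
Local Open Scope group_scope.
Variable T : finType.
Implicit Types (s t : {perm T}) (A : {set T}) (x y z w : T).

Lemma porbit_closed s x w : w \in porbit s x -> s w \in porbit s x.
Proof.
by move=> /porbitP[i ->]; rewrite -permM -expgSr mem_porbit.
Qed.

Lemma agree_porbit s t z :
  (forall w, w \in porbit s z -> t w = s w) -> porbit t z = porbit s z.
Proof.
move=> H.
have E : forall i, (t ^+ i) z = (s ^+ i) z.
  elim=> [|i IH]; first by rewrite !expg0 !perm1.
  rewrite !expgSr !permM IH H //; exact: mem_porbit.
apply/setP => w; apply/porbitP/porbitP => -[i ->]; exists i; by rewrite E.
Qed.

Section Removal.
Variables (s : {perm T}) (x y : T).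
Hypotheses (sxy : s x = y) (nxy : y != x).
Let t := tperm x y * s.

Lemma tsE w : t w = s (tperm x y w).
Proof. by rewrite /t permM. Qed.

Lemma y_in : y \in porbit s x.
Proof. by rewrite -sxy porbit_closed ?porbit_id. Qed.

Lemma removal_orbit : porbit t x = porbit s x :\ y.
Proof.
apply/setP => w; apply/idP/idP.
- move=> /porbitP[i ->]; elim: i => [|i IH].
    by rewrite expg0 perm1 !inE eq_sym nxy porbit_id.
  rewrite expgSr permM; move: IH; set u := (t ^+ i) x.
  rewrite !inE => /andP[uy uo].
  rewrite tsE; have [ux|ux] := eqVneq u x.
    rewrite ux tpermL; apply/andP; split.
      apply/negP => /eqP syy; apply: (negP nxy); apply/eqP.
      by apply: (@perm_inj _ s); rewrite syy sxy.
    by rewrite porbit_closed // y_in.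
  have -> : tperm x y u = u by apply: tpermD; rewrite eq_sym.
  rewrite porbit_closed // andbT.
  by rewrite -sxy (inj_eq perm_inj).
- rewrite !inE => /andP[wy /porbitP[i wE]].
  move: wy; rewrite {}wE; elim: i => [|i IH]; first by move=> _; rewrite expg0 perm1 porbit_id.
  rewrite expgSr permM; set u := (s ^+ i) x => suy.
  have [uy|uy] := eqVneq u y.
    have -> : s u = t x by rewrite tsE tpermL uy.
    by rewrite porbit_closed // porbit_id.
  have ux : u != x by apply: contraNneq suy => ->; rewrite sxy.
  have tu : tperm x y u = u by apply: tpermD; rewrite eq_sym.
  by rewrite -tu -tsE porbit_closed // IH.
Qed.

Lemma removal_other z : z \notin porbit s x -> porbit t z = porbit s z.
Proof.
move=> zn; apply: agree_porbit => w wz.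
have wx : w \notin porbit s x.
  apply: contra zn => wx; rewrite -eq_porbit_mem.
  by rewrite -(eqP (_ : porbit s w == porbit s z)) ?eq_porbit_mem // eq_porbit_mem.
rewrite tsE tpermD //.
  by apply: contraNneq wx => <-; rewrite porbit_id.
by apply: contraNneq wx => <-; rewrite y_in.
Qed.

End Removal.

Definition evenrest A x s :=
  [forall z, (z \in A) ==> (z \notin porbit s x) ==> ~~ odd #|porbit s z|].
Definition Gc A x L :=
  #|[pred s : {perm T} | perm_on A s && (#|porbit s x| == L) && evenrest A x s]|.
Definition Ec A :=
  #|[pred s : {perm T} | perm_on A s && [forall z, (z \in A) ==> ~~ odd #|porbit s z|]]|.

Lemma step_equiv A x y L s : x \in A -> y \in A -> y != x -> 1 < L -> s x = y ->
  (perm_on A s && (#|porbit s x| == L) && evenrest A x s) =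
  (perm_on (A :\ y) (tperm x y * s) && (#|porbit (tperm x y * s) x| == L.-1)
    && evenrest (A :\ y) x (tperm x y * s)).
Proof.
move=> xA yA nxy L1 sxy; set t := tperm x y * s.
have tE w : t w = s (tperm x y w) by rewrite /t permM.
have Ox := removal_orbit sxy nxy; have Oo := removal_other sxy.
rewrite -/t in Ox Oo.
have yO := y_in sxy.
congr (_ && _); first congr (_ && _).
- apply/idP/idP => /subsetP H; apply/subsetP => z; rewrite !inE => zz.
  + have [zy|zy] := eqVneq z y.
      by move: zz; rewrite zy tE tpermR sxy eqxx.
    rewrite /=; have [zx|zx] := eqVneq z x; first by rewrite zx.
    have tz : tperm x y z = z by apply: tpermD; rewrite eq_sym.
    by apply: H; rewrite inE; move: zz; rewrite tE tz.
  + have [zx|zx] := eqVneq z x; first by rewrite zx.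
    have [zy|zy] := eqVneq z y; first by rewrite zy.
    have tz : tperm x y z = z by apply: tpermD; rewrite eq_sym.
    have : z \in A :\ y by apply: H; rewrite inE tE tz.
    by rewrite inE => /andP[].
- rewrite Ox (cardsD1 y (porbit s x)) yO add1n.
  by case: L L1 => [|[|L]].
- apply/forallP/forallP => H z; have := H z; rewrite !inE.
  + have [zy|zy] := eqVneq z y => //= /implyP Hz; apply/implyP => zA.
    apply/implyP; rewrite Ox !inE zy /= => zO; rewrite Oo //.
    by move: (Hz zA) => /implyP; apply.
  + move=> /implyP Hz; apply/implyP => zA; apply/implyP => zO.
    have [zy|zy] := eqVneq z y; first by rewrite zy yO in zO.
    rewrite -Oo //; move: Hz; rewrite zy zA Ox !inE zy /= => /(_ isT) /implyP.
    exact.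
Qed.


Lemma card_part (P : pred {perm T}) (f : {perm T} -> nat) N :
  (forall s, P s -> f s < N.+1) ->
  #|[pred s | P s]| = \sum_(L < N.+1) #|[pred s | P s && (f s == L)]|.
Proof.
move=> Hf; rewrite -sum1_card.
rewrite (partition_big (fun s => (inord (f s) : 'I_N.+1)) predT) //=.
apply: eq_bigr => L _; rewrite -sum1_card; apply: eq_bigl => s; rewrite !inE.
case Ps: (P s) => //=.
by rewrite -val_eqE /= inordK ?Hf.
Qed.

Lemma G_rec A x L : x \in A -> 1 < L ->
  Gc A x L = \sum_(y in A :\ x) Gc (A :\ y) x L.-1.
Proof.
move=> xA L1; rewrite /Gc -sum1_card.
rewrite (partition_big (fun s : {perm T} => s x) (mem (A :\ x))) /=; last first.
  move=> s /andP[/andP[pA /eqP Ls] _]; rewrite !inE (perm_closed _ pA) xA andbT.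
  apply/negP => /eqP sxx; move: L1; rewrite -Ls.
  suff -> : porbit s x = [set x] by rewrite cards1.
  apply/setP => w; rewrite inE; apply/porbitP/eqP => [[i ->]|->].
    by rewrite permX_fix.
  by exists 0%N; rewrite expg0 perm1.
apply: eq_bigr => y; rewrite !inE => /andP[nyx yA].
rewrite -sum1_card (reindex_inj (mulgI (tperm x y))) /=.
apply: eq_bigl => s; rewrite !inE.
have -> : (tperm x y * s) x = s y by rewrite permM tpermL.
have [syy|syy] := eqVneq (s y) y; last first.
  rewrite andbF; apply/esym/negbTE; rewrite negb_and; apply/orP; left.
  rewrite negb_and; apply/orP; left; apply/negP => /subsetP /(_ y).
  by rewrite !inE eqxx /=; move/(_ syy).
rewrite andbT (step_equiv (L:=L) xA yA nyx L1); last by rewrite permM tpermL.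
by rewrite mulgA tperm2 mul1g.
Qed.


Lemma porbit_fix s x : s x = x -> porbit s x = [set x].
Proof.
move=> sx; apply/setP => w; rewrite inE; apply/porbitP/eqP => [[i ->]|->].
  by rewrite permX_fix.
by exists 0%N; rewrite expg0 perm1.
Qed.

Lemma orbit1 s x : (#|porbit s x| == 1%N) = (s x == x).
Proof.
apply/eqP/eqP => [H|sx]; last by rewrite porbit_fix ?cards1.
by have := iter_porbit s x; rewrite H.
Qed.

Lemma porbit_sub A s x : perm_on A s -> x \in A -> porbit s x \subset A.
Proof.
move=> pA xA; apply/subsetP => w /porbitP[i ->]; elim: i => [|i IH].
  by rewrite expg0 perm1.
by rewrite expgSr permM (perm_closed _ pA).
Qed.

Lemma G_1 A x : x \in A -> Gc A x 1%N = Ec (A :\ x).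
Proof.
move=> xA; apply: eq_card => s; rewrite !inE orbit1.
have [sx|sx] /= := eqVneq (s x) x; last first.
  rewrite andbF /=; apply/esym/negbTE; rewrite negb_and; apply/orP; left.
  apply/negP => /subsetP /(_ x); rewrite !inE eqxx /=; by move/(_ sx).
rewrite andbT /evenrest porbit_fix //; congr (_ && _).
  apply/subsetP/subsetP => H z; rewrite !inE => zz.
    apply/andP; split; last by apply: H; rewrite inE.
    by apply: contraNneq zz => ->; rewrite sx.
  by have := H z; rewrite !inE => /(_ zz) /andP[].
apply/forallP/forallP => H z; have := H z; rewrite !inE.
  by case: (z \in A); case: (z != x).
by case: (z \in A); case: (z != x).
Qed.

Lemma G_0 A x : Gc A x 0 = 0%N.
Proof.
apply: eq_card0 => s; rewrite !inE.
by rewrite (negbTE (card_porbit_neq0 s x)) andbF.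
Qed.

Lemma G_big A x L : x \in A -> (#|A| < L)%N -> Gc A x L = 0%N.
Proof.
move=> xA AL; apply: eq_card0 => s; rewrite !inE.
apply/negP => /andP[/andP[pA /eqP Ls] _].
have := subset_leq_card (porbit_sub pA xA); rewrite Ls leqNgt AL.
by [].
Qed.

Lemma part_even A x L : x \in A ->
  #|[pred s : {perm T} | (perm_on A s && [forall z, (z \in A) ==> ~~ odd #|porbit s z|])
      && (#|porbit s x| == L)]| = ((~~ odd L) * Gc A x L)%N.
Proof.
move=> xA; case oL: (odd L) => /=.
  rewrite mul0n; apply: eq_card0 => s; rewrite !inE.
  apply/negP => /andP[/andP[_ /forallP /(_ x)]]; rewrite xA /= => H /eqP Ls.
  by move: H; rewrite Ls oL.
rewrite mul1n; apply: eq_card => s; rewrite !inE.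
case pA: (perm_on A s) => //=.
case: eqP => [Ls|]; rewrite ?andbF ?andbT //=.
apply/forallP/forallP => H z; have := H z.
  by case: (z \in A) => //= ->; rewrite implybT.
case zA: (z \in A) => //=; case zO: (z \in porbit s x) => //= _.
have -> : porbit s z = porbit s x by apply/eqP; rewrite eq_porbit_mem.
by rewrite Ls oL.
Qed.

Lemma Ec_split A x : x \in A ->
  Ec A = \sum_(L < #|A|.+1) (~~ odd L) * Gc A x L.
Proof.
move=> xA; rewrite /Ec (card_part (f := fun s => #|porbit s x|) (N := #|A|)).
  by apply: eq_bigr => L _; rewrite part_even.
move=> s /andP[pA _]; rewrite ltnS; exact: subset_leq_card (porbit_sub pA xA).
Qed.

Lemma Ec_0 : Ec set0 = 1%N.
Proof.
rewrite -(card1 (1 : {perm T})); apply: eq_card => s; rewrite !inE.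
apply/idP/eqP => [/andP[p0 _]|->]; first by apply: perm_on_id p0 _; rewrite cards0.
rewrite perm_on1 /=; apply/forallP => z; by rewrite inE.
Qed.


End Comb.

Fixpoint e (n : nat) : nat :=
  match n with 0 => 1 | 1 => 0 | k.+2 => k.+1 * k.+1 * e k end.

Lemma U_e k : \sum_(L < k.+1) odd L * (k ^_ L * e (k - L)) = e k.+1.
Proof.
suff H : forall k, \sum_(L < k.+1) odd L * (k ^_ L * e (k - L)) = e k.+1 /\
    \sum_(L < k.+2) odd L * (k.+1 ^_ L * e (k.+1 - L)) = e k.+2 by case: (H k).
clear k; elim=> [|k [IHk IHk1]]; first by split; rewrite !big_ord_recl ?big_ord0.
split=> //.
rewrite big_ord_recl big_ord_recl.
rewrite [X in _ + (_ + X)](_ : _ = k.+2 * k.+1 * e k.+1); last first.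
  rewrite -IHk big_distrr; apply: eq_bigr => i _; rewrite !lift0.
  rewrite !ffactnS /= !subSS negbK; ring.
rewrite (_ : odd ord0 = false) // mul0n add0n.
set j := nat_of_ord (lift _ _); have -> : j = 1%N by [].
rewrite ffactn1 subSS subn0 mul1n.
rewrite [e k.+3]/=; ring.
Qed.

Theorem count (T : finType) n : forall A : {set T}, #|A| = n ->
  Ec A = e n /\ (forall x L, x \in A -> 0 < L <= n -> Gc A x L = n.-1 ^_ L.-1 * e (n - L)).
Proof.
elim/ltn_ind: n => -[|k] IH A cA.
  by rewrite (cards0_eq cA) Ec_0; split=> // x [|L] //.
have cAx y : y \in A -> #|A :\ y| = k by move=> yA; move: cA; rewrite (cardsD1 y) yA add1n => -[].
have HG : forall x L, x \in A -> 0 < L <= k.+1 -> Gc A x L = k.+1.-1 ^_ L.-1 * e (k.+1 - L).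
  move=> x [|[|L]] xA //= HL.
    rewrite G_1 // ffactn0 mul1n subSS subn0; by case: (IH k _ _ (cAx x xA)).
  rewrite G_rec //=.
  rewrite (eq_bigr (fun _ => k.-1 ^_ L * e (k - L.+1))); last first.
    move=> y; rewrite !inE => /andP[yx yA].
    case: (IH k _ _ (cAx y yA)) => // _ ->; rewrite // !inE ?xA ?andbT //; first by rewrite eq_sym.
  rewrite sum_nat_const cAx // ffactnS subSS; ring.
split=> //.
have [x xA] : exists x, x \in A by apply/card_gt0P; rewrite cA.
rewrite (Ec_split xA) cA big_ord_recl G_0 muln0 add0n -U_e.
apply: eq_bigr => i _; rewrite lift0 HG //; last exact: ltn_ord.
by rewrite /= subSS negbK.
Qed.

Lemma pT n (s : 'S_n) : perm_on [set: 'I_n] s.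
Proof. by apply/subsetP => z _; rewrite in_setT. Qed.

Import Order.TTheory GRing.Theory Num.Theory.
Local Open Scope ring_scope.

Lemma e_odd n : odd n -> e n = 0%N.
Proof.
suff H : forall n, (odd n -> e n = 0%N) /\ (odd n.+1 -> e n.+1 = 0%N) by case: (H n).
elim=> [|k [IH1 IH2]]; first by split.
split=> // ok; rewrite /= IH1 ?muln0 //; by move: ok; rewrite /= negbK.
Qed.

Lemma e_even_pos n : (0 < e (2 * n))%N.
Proof.
elim: n => [|n IH] //; rewrite mulnS /=; rewrite !muln_gt0 /=; exact: IH.
Qed.

Section Real.
Variable R : realFieldType.

Definition r (j : nat) : R := (e j)%:R / (j`!)%:R.
Definition a (i : nat) : R := r (2 * i).

Lemma r_odd i : r (2 * i).+1 = 0.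
Proof. by rewrite /r e_odd ?mul0r // oddS oddM. Qed.

Lemma a_pos i : 0 < a i.
Proof. by rewrite /a /r divr_gt0 // ltr0n ?e_even_pos ?fact_gt0. Qed.

Lemma a_rec i : a i.+1 = a i * (2 * i + 1)%N%:R / (2 * i + 2)%N%:R.
Proof.
rewrite /a /r mulnS /= !factS !natrM.
have h1 : ((2 * i)`!)%:R != 0 :> R by rewrite pnatr_eq0 -lt0n fact_gt0.
have h2 : (2 * i).+1%:R != 0 :> R by rewrite pnatr_eq0.
have h3 : (2 * i).+2%:R != 0 :> R by rewrite pnatr_eq0.
rewrite !addn1 !addn2; field.
have hi : 0 <= i%:R :> R := ler0n _ _.
rewrite h1 /=; apply/andP; split; apply/negP => /eqP; lra.
Qed.

Definition Tp (I : nat) : R := \sum_(i < I) a i.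

Lemma Tp_S I : Tp I.+1 = (2 * I + 1)%N%:R * a I.
Proof.
elim: I => [|I IH]; first by rewrite /Tp big_ord_recl big_ord0 addr0 mul1r.
rewrite /Tp big_ord_recr /= -/(Tp I.+1) IH a_rec.
have hi : 0 <= I%:R :> R := ler0n _ _.
rewrite ?natrD ?natrM; field.
apply/negP => /eqP; lra.
Qed.

Definition Rs (N : nat) : R := \sum_(j < N) r j.

Lemma Rs_S N : Rs N.+1 = Rs N + r N.
Proof. by rewrite /Rs big_ord_recr. Qed.

Lemma Rs_Tp I : Rs (2 * I) = Tp I /\ Rs (2 * I).+1 = Tp I.+1.
Proof.
elim: I => [|I [IH1 IH2]].
  by rewrite /Rs /Tp !big_ord_recl !big_ord0 /a.
have E : (2 * I.+1 = (2 * I).+2)%N by rewrite mulnS.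
split; first by rewrite E Rs_S IH2 r_odd addr0.
rewrite E Rs_S Rs_S IH2 r_odd addr0 [Tp I.+2]/Tp big_ord_recr /= -/(Tp I.+1). by rewrite /a E.
Qed.


Lemma decr_chain (f : nat -> R) : (forall k, f k.+1 <= f k) ->
  forall i m, (i <= m)%N -> f m <= f i.
Proof.
move=> H i; elim=> [|m IH]; first by rewrite leqn0 => /eqP ->.
rewrite leq_eqVlt => /orP[/eqP ->//|]; rewrite ltnS => /IH.
exact: le_trans (H m).
Qed.

Lemma q_bounds (n : R) : 0 <= n ->
  ((2 * n + 1) / (2 * n + 2)) ^+ 2 * (2 * n + 3) <= 2 * n + 1 /\
  4 * n + 1 <= ((2 * n + 1) / (2 * n + 2)) ^+ 2 * (4 * n + 5).
Proof.
move=> n0; have h : 0 < 2 * n + 2 by lra.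
rewrite expr_div_n; split.
  rewrite mulrAC ler_pdivrMr ?exprn_gt0 //; nra.
rewrite mulrAC ler_pdivlMr ?exprn_gt0 //; nra.
Qed.

Lemma mono1 i m : (i <= m)%N ->
  a m ^+ 2 * (2 * m + 1)%N%:R <= a i ^+ 2 * (2 * i + 1)%N%:R.
Proof.
apply: (decr_chain (f := fun k => a k ^+ 2 * (2 * k + 1)%N%:R)) => k.
rewrite a_rec.
have [h1 _] := q_bounds (ler0n R k).
have E1 : (2 * k.+1 + 1)%N%:R = 2 * k%:R + 3 :> R.
  by rewrite natrD natrM mulrSr; lra.
have E2 : (2 * k + 1)%N%:R = 2 * k%:R + 1 :> R.
  by rewrite natrD natrM.
have E3 : (2 * k + 2)%N%:R = 2 * k%:R + 2 :> R by rewrite natrD natrM.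
rewrite E1 E2 E3 -mulrA exprMn -mulrA ler_wpM2l ?sqr_ge0 //.
Qed.

Lemma mono2 i m : (i <= m)%N ->
  a i ^+ 2 * (4 * i + 1)%N%:R <= a m ^+ 2 * (4 * m + 1)%N%:R.
Proof.
move=> im.
suff H : forall k, - (a k.+1 ^+ 2 * (4 * k.+1 + 1)%N%:R) <= - (a k ^+ 2 * (4 * k + 1)%N%:R).
  have := decr_chain H im; by rewrite lerN2.
move=> k; rewrite lerN2 a_rec.
have [_ h1] := q_bounds (ler0n R k).
have E1 : (4 * k.+1 + 1)%N%:R = 4 * k%:R + 5 :> R by rewrite natrD natrM mulrSr; lra.
have E2 : (2 * k + 1)%N%:R = 2 * k%:R + 1 :> R by rewrite natrD natrM.
have E3 : (2 * k + 2)%N%:R = 2 * k%:R + 2 :> R by rewrite natrD natrM.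
have E4 : (4 * k + 1)%N%:R = 4 * k%:R + 1 :> R by rewrite natrD natrM.
rewrite E1 E2 E3 E4; move: (a k) => x.
apply: le_trans (ler_wpM2l (sqr_ge0 x) h1) _; by rewrite mulrA -exprMn mulrA.
Qed.


Lemma core_bounds I m (s t : R) : (I <= m)%N -> 0 <= s <= (2 * I + 1)%N%:R -> 0 <= t ->
  2 * (2 * I + 1)%N%:R ^+ 2 <= t * (4 * I + 1)%N%:R ->
  s * (2 * m + 1)%N%:R * a m ^+ 2 <= ((2 * I + 1)%N%:R * a I) ^+ 2 /\
  2 * ((2 * I + 1)%N%:R * a I) ^+ 2 <= t * (4 * m + 1)%N%:R * a m ^+ 2.
Proof.
move=> Im /andP[s0 s1] t0 ht.
have h1 := mono1 Im; have h2 := mono2 Im.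
move: h1 h2 ht s1; set u := (2 * I + 1)%N%:R; set X := a I ^+ 2; set Y := a m ^+ 2.
set v := (2 * m + 1)%N%:R; set w := (4 * m + 1)%N%:R; set z := (4 * I + 1)%N%:R.
have u0 : 0 <= u by []. have z0 : 0 <= z by [].
have X0 : 0 <= X by rewrite sqr_ge0. have Y0 : 0 <= Y by rewrite sqr_ge0.
rewrite exprMn -/X => h1 h2 ht s1; split.
  have := ler_wpM2l s0 h1; have := ler_wpM2r (mulr_ge0 X0 u0) s1; nra.
have := ler_wpM2l t0 h2; have := ler_wpM2r X0 ht; nra.
Qed.


Lemma natLin (p q I : nat) : (p * I + q)%N%:R = p%:R * I%:R + q%:R :> R.
Proof. by rewrite natrD natrM. Qed.

Lemma r_ge0 j : 0 <= r j.
Proof. by rewrite /r divr_ge0. Qed.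

Lemma Rs_ge0 N : 0 <= Rs N.
Proof. by apply: sumr_ge0 => j _; apply: r_ge0. Qed.

Lemma Rs_bounds m N : (N <= 2 * m)%N ->
  (N%:R - 1) * (2 * m + 1)%N%:R * a m ^+ 2 <= Rs N ^+ 2 /\
  2 * Rs N ^+ 2 <= (N%:R + 1) * (4 * m + 1)%N%:R * a m ^+ 2.
Proof.
have [I [-> | ->]] : exists I, N = (2 * I)%N \/ N = (2 * I).+1.
  exists N./2; have := odd_double_half N; case: (odd N) => H; [right|left];
  by rewrite -{1}H mul2n.
- move=> hI; have Im : (I <= m)%N by rewrite leq_pmul2l in hI.
  rewrite (proj1 (Rs_Tp I)).
  case: I Im hI => [|I] Im hI.
    rewrite /Tp big_ord0 expr0n /= mulr0; split; last first.
      by apply: mulr_ge0 (sqr_ge0 _); apply: mulr_ge0; rewrite ?addr_ge0 ?ler0n.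
    by rewrite muln0 sub0r !mulNr mul1r oppr_le0; exact: mulr_ge0 (ler0n _ _) (sqr_ge0 _).
  rewrite Tp_S; have Im' : (I <= m)%N by apply: ltnW.
  have := @core_bounds I m (2 * I%:R + 1) (2 * I%:R + 3) Im'.
  rewrite !natLin; have i0 : 0 <= I%:R :> R := ler0n _ _.
  have -> : (2 * I.+1)%N%:R = 2 * I%:R + 2 :> R by rewrite natrM mulrSr; lra.
  move=> H; case: H.
  - apply/andP; split; lra.
  - lra.
  - nra.
  move=> H1 H2; split.
    by apply: le_trans H1; rewrite (_ : 2 * I%:R + 2 - 1 = 2 * I%:R + 1) //; lra.
  by apply: le_trans H2 _; rewrite (_ : 2 * I%:R + 2 + 1 = 2 * I%:R + 3) //; lra.
- move=> hI; have Im : (I <= m)%N.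
    by rewrite -(leq_pmul2l (isT : 0 < 2)%N) ltnW.
  rewrite (proj2 (Rs_Tp I)) Tp_S.
  have := @core_bounds I m (2 * I%:R) (2 * I%:R + 2) Im.
  rewrite !natLin; have i0 : 0 <= I%:R :> R := ler0n _ _.
  have -> : (2 * I).+1%:R = 2 * I%:R + 1 :> R by rewrite -addn1 natLin.
  move=> H; case: H.
  - apply/andP; split; lra.
  - lra.
  - nra.
  move=> H1 H2; split.
    by apply: le_trans H1; rewrite (_ : 2 * I%:R + 1 - 1 = 2 * I%:R) //; lra.
  by apply: le_trans H2 _; rewrite (_ : 2 * I%:R + 1 + 1 = 2 * I%:R + 2) //; lra.
Qed.

End Real.

Section Sqrt.
Variable R : rcfType.

Lemma sqrt_diff (p q : R) : 0 <= p -> 0 <= q ->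
  `|Num.sqrt p - Num.sqrt q| <= Num.sqrt `|p - q|.
Proof.
move=> p0 q0.
wlog pq : p q p0 q0 / q <= p.
  move=> H; case: (leP q p) => [/H|/ltW qp]; first exact.
  by rewrite distrC (distrC p); apply: H.
rewrite [`|p - q|]ger0_norm ?subr_ge0 //.
have u0 := sqrtr_ge0 p; have v0 := sqrtr_ge0 q; have d0 := sqrtr_ge0 (p - q).
have hu := sqr_sqrtr p0; have hv := sqr_sqrtr q0.
have hd : Num.sqrt (p - q) ^+ 2 = p - q by rewrite sqr_sqrtr // subr_ge0.
move: u0 v0 d0 hu hv hd.
set u := Num.sqrt p; set v := Num.sqrt q; set d := Num.sqrt (p - q).
move=> u0 v0 d0 hu hv hd.
rewrite ler_norml; apply/andP; split; nra.
Qed.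

Lemma W_close (c : R) m N : 0 <= c <= 1 -> (0 < m)%N -> (N <= 2 * m)%N ->
  2 * c * m%:R <= N%:R <= 2 * c * m%:R + 1 ->
  `|Rs R N / ((2 * m)%N%:R * a R m) - Num.sqrt c| <= Num.sqrt (2 / m%:R).
Proof.
move=> /andP[c0 c1] m0 Nm /andP[N1 N2].
have [H1 H2] := Rs_bounds R Nm.
have ap := a_pos R m.
have M1 : 1 <= m%:R :> R by rewrite ler1n.
set w := Rs R N / _.
have w0 : 0 <= w by rewrite divr_ge0 ?Rs_ge0 // mulr_ge0 // ltW.
have -> : w = Num.sqrt (w ^+ 2) by rewrite sqrtr_sqr ger0_norm.
apply: le_trans (sqrt_diff (sqr_ge0 _) c0) _.
rewrite ler_sqrt ?divr_ge0 ?ler0n //.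
rewrite /w expr_div_n exprMn natrM.
move: H1 H2 N1 N2; set S := Rs R N ^+ 2; set Y := a R m ^+ 2.
have Y0 : 0 < Y by rewrite exprn_gt0.
set M := m%:R; set Nr := N%:R.
rewrite natLin natLin.
move=> H1 H2 N1 N2.
have S0 : 0 <= S by rewrite sqr_ge0.
have -> : S / ((2 * M) ^+ 2 * Y) - c = (S - 4 * c * M ^+ 2 * Y) / (4 * M ^+ 2 * Y).
  field; apply/andP; split; apply/negP => /eqP; nra.
have D : 0 < 4 * M ^+ 2 * Y by apply: mulr_gt0 => //; apply: mulr_gt0; [lra | apply: exprn_gt0; lra].
rewrite normrM (gtr0_norm (x := (_)^-1)) ?invr_gt0 // ler_pdivrMr //.
have -> : 2 / M * (4 * M ^+ 2 * Y) = 8 * M * Y by field; apply/negP => /eqP; lra.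
rewrite ler_norml; apply/andP; split.
  have h : (Nr - 1 - (2 * c * M - 1)) * (2 * M + 1) * Y >= 0.
    apply: mulr_ge0; last exact: ltW. apply: mulr_ge0; lra.
  nra.
have h : (2 * c * M + 1 - Nr) * (4 * M + 1) * Y >= 0.
  apply: mulr_ge0; last exact: ltW. apply: mulr_ge0; lra.
nra.
Qed.

End Sqrt.

Section Thr.
Variable P : pred nat.
Hypothesis Pdown : forall i j, (i <= j)%N -> P j -> P i.

Definition cnt n := (\sum_(j < n) (P j : nat))%N.

Lemma cnt_S n : cnt n.+1 = (cnt n + P n)%N.
Proof. by rewrite /cnt big_ord_recr. Qed.

Lemma thr n : (forall j, (j < n)%N -> P j = (j < cnt n)%N) /\ (cnt n <= n)%N.
Proof.
elim: n => [|n [IH1 IH2]]; first by split=> [j|] //; rewrite /cnt big_ord0.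
rewrite cnt_S; case Pn: (P n) => /=.
  have cn : cnt n = n.
    apply/eqP; rewrite eqn_leq IH2 /=.
    case: n Pn IH1 IH2 => [//|n] Pn IH1 _; rewrite -(IH1 n) //; exact: Pdown Pn.
  split; last by rewrite cn addn1.
  move=> j; rewrite cn addn1 ltnS => jn; by rewrite jn (Pdown jn Pn).
rewrite addn0; split; last exact: leqW.
move=> j; rewrite ltnS leq_eqVlt => /orP[/eqP ->|]; last exact: IH1.
by rewrite Pn ltnNge IH2.
Qed.

Lemma thr_sum (R : nmodType) (f : nat -> R) n :
  (\sum_(j < n | P j) f j = \sum_(j < cnt n) f j)%R.
Proof.
have [H1 H2] := thr n.
rewrite (big_ord_widen n (fun j => f j) H2).
by apply: eq_bigl => j; rewrite H1.
Qed.

Lemma thr_lt n : (cnt n < n)%N -> ~~ P (cnt n).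
Proof. by move=> h; have [H1 _] := thr n; rewrite H1 // ltnn. Qed.

Lemma thr_gt n : (0 < cnt n)%N -> P (cnt n).-1.
Proof.
move=> h; have [H1 H2] := thr n; rewrite H1 ?prednK //.
Qed.

End Thr.

From mathcomp Require Import all_classical all_reals topology normedtype sequences.
Import Order.TTheory GRing.Theory Num.Theory.
Local Open Scope classical_set_scope.
Local Open Scope ring_scope.

Lemma ind_eq (R : realDomainType) (x y z : R) : y <= z ->
  ((x <= z)%R && (y <= x)%R)%:R = (x <= z)%R%:R - (x < y)%R%:R :> R.
Proof.
move=> yz; case: (lerP x z) => xz; case: (ltrP x y) => xy /=.
- by rewrite subrr.
- by rewrite subr0.
- lra.
- lra.
Qed.


Lemma den_eq k : #|[pred s : 'S_(k.+1) | all_cycles_even s]| = e k.+1.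
Proof.
have [H _] := count (cardsT 'I_k.+1).
rewrite card_ord in H; rewrite -H; apply: eq_card => s; rewrite !inE pT /=.
by apply: eq_forallb => z; rewrite finset.in_setT.
Qed.

Lemma num_eq k (cnd : nat -> bool) :
  #|[pred s : 'S_(k.+1) | all_cycles_even s && cnd #|porbit s ord0| ]| =
  (\sum_(L < k.+2) cnd L * (~~ odd L * Gc [set: 'I_k.+1] ord0 L))%N.
Proof.
rewrite (card_part (f := fun s : 'S_(k.+1) => #|porbit s ord0|) (N := k.+1)); last first.
  by move=> s _; rewrite ltnS; apply: leq_trans (max_card _) _; rewrite card_ord.
apply: eq_bigr => L _.
rewrite -part_even ?finset.in_setT //.
case cL: (cnd L) => /=; last first.
  rewrite mul0n; apply: eq_card0 => s; rewrite !inE.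
  by case: eqP => [->|]; rewrite ?cL ?andbF ?andbT.
rewrite mul1n; apply: eq_card => s; rewrite !inE pT /=.
case: eqP => [->|]; rewrite ?cL ?andbF ?andbT //=.
by apply: eq_forallb => z; rewrite finset.in_setT.
Qed.


Lemma term_eq (R : realFieldType) k i : (i <= k)%N -> (0 < e k.+1)%N ->
  (k ^_ i * e (k - i))%N%:R / (e k.+1)%:R = r R (k - i) / (k.+1%:R * r R k.+1).
Proof.
move=> ik ep; rewrite /r.
have F := ffact_fact ik.
have h1 : (k - i)`!%:R != 0 :> R by rewrite pnatr_eq0 -lt0n fact_gt0.
have h2 : k.+1%:R != 0 :> R by rewrite pnatr_eq0.
have h3 : (e k.+1)%:R != 0 :> R by rewrite pnatr_eq0 -lt0n.
have h4 : k`!%:R != 0 :> R by rewrite pnatr_eq0 -lt0n fact_gt0.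
rewrite factS natrM -F natrM natrM.
field. rewrite h1 h3 andbT /=; apply/andP; split; last by rewrite addrC natr1 pnatr_eq0.
by move: h4; rewrite -F natrM mulf_eq0 negb_or => /andP[].
Qed.

Definition P1 (R : realType) (c : R) n := fun j : nat => ((j%:R : R) <= c * n%:R)%R.
Definition P2 (R : realType) (c : R) n := fun j : nat => ((j%:R : R) < c * n%:R)%R.

Lemma pe_eq (R : realType) (g d : R) m : (0 < m)%N -> g <= d ->
  p_e g d (2 * m) =
  (Rs R (cnt (P1 (1 - g) (2 * m)) (2 * m)) - Rs R (cnt (P2 (1 - d) (2 * m)) (2 * m)))
   / ((2 * m)%N%:R * a R m).
Proof.
move=> m0 gd.
set k := (2 * m).-1.
have Ek : (2 * m)%N = k.+1 by rewrite /k prednK // muln_gt0.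
have ep : (0 < e k.+1)%N by rewrite -Ek e_even_pos.
rewrite /a Ek /p_e.
rewrite (num_eq k (fun L => (g * k.+1%:R <= L%:R) && (L%:R <= d * k.+1%:R))).
rewrite den_eq natr_sum mulr_suml big_ord_recl G_0 !muln0 mulr0n mul0r add0r.
set D := (k.+1%:R * r R k.+1).
have [_ HG] := count (cardsT 'I_k.+1); rewrite card_ord in HG.
have kodd : odd k by move: (odd_double m); rewrite -mul2n Ek /= => /negbFE.
rewrite (eq_bigr (fun i : 'I_k.+1 => ((g * k.+1%:R <= (i.+1)%:R) &&
   ((i.+1)%:R <= d * k.+1%:R))%:R * (r R (k - i) / D))); last first.
  move=> i _; rewrite lift0 natrM natrM.
  rewrite HG ?finset.in_setT //= -mulrA; congr (_ * _).
  have ik : (i <= k)%N by rewrite -ltnS ltn_ord.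
  rewrite -term_eq //.
  case oi: (odd i) => /=; first by rewrite mul1r.
  rewrite e_odd ?muln0 ?mulr0 ?mul0r //.
  by rewrite subSS oddB // kodd oi.
under eq_bigr do rewrite mulrA.
rewrite -mulr_suml (reindex_inj rev_ord_inj) /=; congr (_ / D).
have P1d (c : R) n : forall i j, (i <= j)%N -> P1 c n j -> P1 c n i.
  by move=> i j ij; rewrite /P1; apply: le_trans; rewrite ler_nat.
have P2d (c : R) n : forall i j, (i <= j)%N -> P2 c n j -> P2 c n i.
  by move=> i j ij; rewrite /P2; apply: le_lt_trans; rewrite ler_nat.
rewrite /Rs -(thr_sum (P1d (1 - g) k.+1)) -(thr_sum (P2d (1 - d) k.+1)) [X in _ = X - _]big_mkcond [X in _ = _ - X]big_mkcond /=.
rewrite -sumrB; apply: eq_bigr => j _.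
have jk : (j <= k)%N by rewrite -ltnS ltn_ord.
rewrite subSS subKn // -subSn // natrB //; last exact: leqW.
have n0 : 0 <= k.+1%:R :> R := ler0n _ _.
have -> : (g * k.+1%:R <= k.+1%:R - j%:R) = (j%:R <= (1 - g) * k.+1%:R).
  by apply/idP/idP => h; lra.
have -> : (k.+1%:R - j%:R <= d * k.+1%:R) = ((1 - d) * k.+1%:R <= j%:R).
  by apply/idP/idP => h; lra.
rewrite ind_eq; last by nra.
rewrite /P1 /P2; case: (_ <= _); case: (_ < _) => /=; rewrite ?subrr ?subr0 ?sub0r;
  lra.
Qed.

Lemma cnt_le (P : pred nat) (Pd : forall i j, (i <= j)%N -> P j -> P i) n :
  (cnt P n <= n)%N.
Proof. by have [_ ->] := thr Pd n. Qed.

Lemma cnt1_bounds (R : realType) (c : R) n : 0 <= c <= 1 ->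
  c * n%:R <= (cnt (P1 c n) n)%:R <= c * n%:R + 1.
Proof.
move=> /andP[c0 c1].
have Pd : forall i j, (i <= j)%N -> P1 c n j -> P1 c n i.
  by move=> i j ij; rewrite /P1; apply: le_trans; rewrite ler_nat.
have Nn := cnt_le Pd n; set N := cnt _ _ in Nn *.
have n0 : 0 <= n%:R :> R := ler0n _ _.
apply/andP; split.
  have [Nlt|] := ltnP N n.
    by have := thr_lt Pd Nlt; rewrite /P1 -/N -ltNge => /ltW.
  move=> nN; have -> : N = n by apply/eqP; rewrite eqn_leq Nn nN.
  nra.
have [N0|N0] := posnP N; first by rewrite N0; nra.
have := thr_gt Pd N0; rewrite /P1 -/N.
move=> h; have : N%:R = (N.-1)%:R + 1 :> R by rewrite natr1 prednK.
lra.
Qed.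

Lemma cnt2_bounds (R : realType) (c : R) n : 0 <= c <= 1 ->
  c * n%:R <= (cnt (P2 c n) n)%:R <= c * n%:R + 1.
Proof.
move=> /andP[c0 c1].
have Pd : forall i j, (i <= j)%N -> P2 c n j -> P2 c n i.
  by move=> i j ij; rewrite /P2; apply: le_lt_trans; rewrite ler_nat.
have Nn := cnt_le Pd n; set N := cnt _ _ in Nn *.
have n0 : 0 <= n%:R :> R := ler0n _ _.
apply/andP; split.
  have [Nlt|] := ltnP N n.
    by have := thr_lt Pd Nlt; rewrite /P2 -/N -leNgt.
  move=> nN; have -> : N = n by apply/eqP; rewrite eqn_leq Nn nN.
  nra.
have [N0|N0] := posnP N; first by rewrite N0; nra.
have := thr_gt Pd N0; rewrite /P2 -/N.
move=> h; have : N%:R = (N.-1)%:R + 1 :> R by rewrite natr1 prednK.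
lra.
Qed.

Lemma W_close' (R : realType) (c : R) m (P : pred nat)
  (Pd : forall i j, (i <= j)%N -> P j -> P i) : 0 <= c <= 1 -> (0 < m)%N ->
  c * (2 * m)%N%:R <= (cnt P (2 * m))%:R <= c * (2 * m)%N%:R + 1 ->
  `|Rs R (cnt P (2 * m)) / ((2 * m)%N%:R * a R m) - Num.sqrt c| <= Num.sqrt (2 / m%:R).
Proof.
move=> c01 m0 hb; apply: W_close => //; first exact: cnt_le.
by rewrite natrM mulrCA mulrA in hb.
Qed.

Theorem theorem3p5 (R : realType) (gamma delta : R)
  (h0g : 0 <= gamma) (hgd : gamma <= delta) (hd1 : delta <= 1) :
  ((fun m : nat => p_e gamma delta (2 * m)%N) : nat -> R^o) @ \oo -->
    (Num.sqrt (1 - gamma) - Num.sqrt (1 - delta) : R^o).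
Proof.
apply/cvgrPdistC_le => eps ep.
near=> m.
have m1 : (1 <= m)%N by near: m; exact: nbhs_infty_ge.
have mb : 8 / eps ^+ 2 <= m%:R :> R by near: m; exact: nbhs_infty_ger.
have c1 : 0 <= 1 - gamma <= 1 by apply/andP; split; lra.
have c2 : 0 <= 1 - delta <= 1 by apply/andP; split; lra.
have P1d (c : R) n : forall i j, (i <= j)%N -> P1 c n j -> P1 c n i.
  by move=> i j ij; rewrite /P1; apply: le_trans; rewrite ler_nat.
have P2d (c : R) n : forall i j, (i <= j)%N -> P2 c n j -> P2 c n i.
  by move=> i j ij; rewrite /P2; apply: le_lt_trans; rewrite ler_nat.
have W1 := W_close' (P1d (1 - gamma) (2 * m)%N) c1 m1 (cnt1_bounds _ c1).
have W2 := W_close' (P2d (1 - delta) (2 * m)%N) c2 m1 (cnt2_bounds _ c2).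
rewrite pe_eq // mulrBl.
set A := Rs R _ / _ in W1; set B := Rs R _ / _ in W2.
have sb : Num.sqrt (2 / m%:R) <= eps / 2.
  have e2 : 0 <= eps / 2 by lra.
  rewrite -(ger0_norm e2) -sqrtr_sqr ler_sqrt ?sqr_ge0 //.
  have M0 : 0 < m%:R :> R by rewrite ltr0n.
  have E0 : 0 < eps ^+ 2 by rewrite exprn_gt0.
  rewrite ler_pdivrMr // expr_div_n.
  move: mb; rewrite ler_pdivrMr //.
  nra.
have : `|A - B - (Num.sqrt (1 - gamma) - Num.sqrt (1 - delta))| <=
    `|A - Num.sqrt (1 - gamma)| + `|B - Num.sqrt (1 - delta)|.
  rewrite (_ : A - B - _ = (A - Num.sqrt (1 - gamma)) - (B - Num.sqrt (1 - delta))); last by ring.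
  exact: ler_normB.
lra.
Unshelve. all: by end_near.
Qed.
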